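(* Let $N\ge 3$ and let $\mathbf{g}=\mathbf{1}_{[0,W-1]}\in\mathbb{R}^N$ be the rectangular window ($\mathbf{g}[n]=1$ for $0\le n\le W-1$ and $0$ for $W\le n\le N-1$). Suppose (1) $2\le W\le N-1$, and (2) $N$ is coprime to $W$ and to $W-1$. Then for every non-vanishing $\mathbf{x}\in\mathbb{C}^N$, the algebraic algorithm described in the context, applied to the STFT magnitude $|\mathbf{X}[m,k]|^2$ of $\mathbf{x}$ with this window and $L=1$, outputs $e^{i\phi}\mathbf{x}$ for some $\phi\in\mathbb{R}$.
   Context: A vector $\mathbf{x}$ is non-vanishing if $\mathbf{x}[n]\ne0$ for all $n$. Signals and windows are indexed by $\{0,\dots,N-1\}$ and extended $N$-periodically. The STFT of $\mathbf{x}\in\mathbb{C}^N$ with window $\mathbf{g}$ and step $L=1$ is $\mathbf{X}[m,k]=\sum_{n=0}^{N-1}\mathbf{x}[n]\mathbf{g}[m-n]e^{-2\pi i kn/N}$, $m,k=0,\dots,N-1$. Algebraic algorithm: given $\mathbf{Y}[m,k]=|\mathbf{X}[m,k]|^2$, (1) compute $\mathbf{Z}[m,\ell]=\sum_{k=0}^{N-1}\mathbf{Y}[m,k]e^{-2\pi i k\ell/N}$ and $\mathbf{z}_\ell=(\mathbf{Z}[m,\ell])_{m=0}^{N-1}$; (2) for $\ell=0,1$ compute $\mathbf{x}_\ell=\frac1N\mathbf{G}_\ell^{-1}\mathbf{z}_\ell$, where $\mathbf{G}_\ell$ is the $N\times N$ circulant matrix with first column $(\mathbf{g}[m]\overline{\mathbf{g}[(m-\ell)\bmod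 N]})_{m=0}^{N-1}$, and set $\hat{\mathbf{x}}[0]=\sqrt{\mathbf{x}_0[0]}$; (3) recursively for $n=0,\dots,N-2$ define $\hat{\mathbf{x}}[n+1]$ by $\overline{\hat{\mathbf{x}}[n+1]}=\mathbf{x}_1[n]/\hat{\mathbf{x}}[n]$; output $\hat{\mathbf{x}}$. *)

(* Defs.v *)
From HB Require Import structures.
From mathcomp Require Import all_boot all_order all_algebra.
From mathcomp Require Import all_classical all_reals.
From mathcomp Require Import exp trigo.
From mathcomp Require Import complex.
Set Implicit Arguments. Unset Strict Implicit. Unset Printing Implicit Defensive.
Import Order.TTheory GRing.Theory Num.Theory ComplexField.
Local Open Scope ring_scope.
Local Open Scope complex_scope.

Section STFT.
Variable R : realType.
Local Notation C := R[i].

Definition expi (t : R) : C := (cos t) +i* (sin t).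

Definition twiddle (N k n : nat) : C :=
  expi (- (2 * pi * (k * n)%N%:R / N%:R)).

(* Signals/windows are functions nat -> C; only indices 0..N-1 matter,
   and they are extended N-periodically through (_ %% N). *)
Definition stft (N : nat) (g x : nat -> C) (m k : nat) : C :=
  \sum_(n < N) x n * g ((m + N - n) %% N)%N * twiddle N k n.

Definition stft_mag2 (N : nat) (g x : nat -> C) (m k : nat) : C :=
  `|stft N g x m k| ^+ 2.

Definition rect_window (N W : nat) (n : nat) : C :=
  if (n %% N < W)%N then 1 else 0.

Definition Zcoef (N : nat) (Y : nat -> nat -> C) (m l : nat) : C :=
  \sum_(k < N) Y m k * twiddle N k l.

Definition zvec (N : nat) (Y : nat -> nat -> C) (l : nat) : 'cV[C]_N :=
  \col_(m < N) Zcoef N Y m l.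

Definition Gcol (N : nat) (g : nat -> C) (l m : nat) : C :=
  g (m %% N)%N * (g ((m + N - l %% N) %% N)%N)^*.

Definition Gmat (N : nat) (g : nat -> C) (l : nat) : 'M[C]_N :=
  \matrix_(i < N, j < N) Gcol N g l ((i + N - j) %% N)%N.

Definition xl_vec (N : nat) (g : nat -> C) (Y : nat -> nat -> C) (l : nat)
  : 'cV[C]_N := (N%:R)^-1 *: (invmx (Gmat N g l) *m zvec N Y l).

(* reading entry n of a column vector (0 outside 0..N-1) *)
Definition vget (N : nat) (v : 'cV[C]_N) (n : nat) : C :=
  odflt 0 (omap (fun i : 'I_N => v i ord0) (insub n)).

Definition xl (N : nat) (g : nat -> C) (Y : nat -> nat -> C) (l n : nat) : C :=
  vget (xl_vec N g Y l) n.

Fixpoint xhat (N : nat) (g : nat -> C) (Y : nat -> nat -> C) (n : nat) : C :=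
  match n with
  | 0 => sqrtC (xl N g Y 0 0)
  | n'.+1 => (xl N g Y 1 n' / xhat N g Y n')^*
  end.

Definition algebraic_algorithm (N : nat) (g : nat -> C) (Y : nat -> nat -> C)
  : nat -> C := xhat N g Y.

End STFT.

Arguments expi {R} t.
Arguments twiddle {R} N k n.
Arguments stft {R} N g x m k.
Arguments stft_mag2 {R} N g x m k.
Arguments rect_window {R} N W n.
Arguments Zcoef {R} N Y m l.
Arguments zvec {R} N Y l.
Arguments Gcol {R} N g l m.
Arguments Gmat {R} N g l.
Arguments xl_vec {R} N g Y l.
Arguments vget {R} N v n.
Arguments xl {R} N g Y l n.
Arguments xhat {R} N g Y n.
Arguments algebraic_algorithm {R} N g Y _.

(* Main.v *)
Require Import Defs.
From HB Require Import structures.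
From mathcomp Require Import all_boot all_order all_algebra.
From mathcomp Require Import all_classical all_reals.
From mathcomp Require Import exp trigo complex.
From mathcomp Require Import zify ring lra.
Import Order.TTheory GRing.Theory Num.Theory ComplexField.
Local Open Scope ring_scope.

Lemma conjcE (R : rcfType) (x : R[i]) : conjc x = x^*. Proof. by []. Qed.

Section S.
Variable R : realType.
Local Notation C := R[i].

Lemma expiD (a b : R) : expi (a + b) = expi a * expi b.
Proof. rewrite /expi sinD cosD /=. simpc. congr (_ +i* _)%C; ring. Qed.

Lemma expi0 : expi 0 = 1 :> C.
Proof. by rewrite /expi cos0 sin0. Qed.

Lemma expiJ (a : R) : (expi a)^* = expi (- a).
Proof. by rewrite -[LHS]/(conjc (expi a)) /expi cosN sinN. Qed.

Lemma expiX (a : R) n : expi a ^+ n = expi (n%:R * a).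
Proof.
elim: n => [|n IH]; first by rewrite mul0r expi0.
by rewrite exprS IH -expiD -addn1 natrD mulrDl mul1r addrC.
Qed.

Lemma expi_eq1 (t : R) : 0 < t < pi *+ 2 -> expi t != 1.
Proof.
move=> /andP[t0 t2]; rewrite /expi; apply/eqP => /(congr1 (fun z : C => (complex.Re z, complex.Im z))) /= [c1 s0].
have [tpi|pit] := ltrP t pi.
  by move: (@sin_gt0_pi R t); rewrite t0 tpi s0 ltxx => /(_ isT).
move: pit; rewrite le_eqVlt => /orP[/eqP pt|pit].
  by move: c1; rewrite -pt (@cospi R) => h; lra.
have : 0 < sin (t - pi).
  apply: sin_gt0_pi; apply/andP; split; first by rewrite subr_gt0.
  by rewrite ltrBlDr -mulr2n.
rewrite -[t - pi]addrC sinD sinN cosN (@sinpi R) (@cospi R) s0 => h; lra.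
Qed.

Variable N : nat.
Hypothesis N0 : (0 < N)%N.

Definition w : C := expi (- (2 * pi / N%:R)).

Lemma Nr0 : (N%:R : R) != 0. Proof. by rewrite pnatr_eq0 -lt0n. Qed.
Lemma NC0 : (N%:R : C) != 0. Proof. by rewrite pnatr_eq0 -lt0n. Qed.

Lemma twiddleE k n : twiddle N k n = w ^+ (k * n).
Proof. rewrite /twiddle /w expiX; congr expi. by rewrite mulrN mulrCA -mulrA. Qed.

Lemma wN : w ^+ N = 1.
Proof.
rewrite /w expiX mulrN mulrCA mulfV ?Nr0 // mulr1 /expi cosN sinN.
have -> : (2 : R) * pi = pi *+ 2 by rewrite mulr_natl.
by rewrite (@cos2pi R) (@sin2pi R) oppr0.
Qed.

Lemma wmod a : w ^+ a = w ^+ (a %% N).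
Proof. by rewrite {1}(divn_eq a N) exprD exprM exprAC wN expr1n mul1r. Qed.

Lemma w_neq1 b : (0 < b < N)%N -> w ^+ b != 1.
Proof.
move=> /andP[b0 bN]; apply/negP => /eqP h.
have : (w ^+ b)^* = 1 by rewrite h conjC1.
rewrite /w expiX expiJ => /eqP; apply/negP; apply: expi_eq1.
have pi0 := @pi_gt0 R.
rewrite mulrN opprK; apply/andP; split.
  by rewrite mulr_gt0 ?ltr0n // divr_gt0 ?ltr0n // mulr_gt0.
rewrite mulrC -mulrA.
have hb : (b%:R / N%:R : R) < 1 by rewrite ltr_pdivrMr ?ltr0n // mul1r ltr_nat.
have -> : 2 * (pi / N%:R) * b%:R = (pi *+ 2) * (b%:R / N%:R) :> R.
  by rewrite -mulr_natl; ring.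
by rewrite -[X in _ < X]mulr1 ltr_pM2l // mulrn_wgt0.
Qed.

Lemma sum_w a : \sum_(k < N) w ^+ (k * a) = if (N %| a)%N then N%:R else 0.
Proof.
case: ifP => hd.
  transitivity (\sum_(k < N) (1 : C)); last by rewrite sumr_const card_ord.
  apply: eq_bigr => k _; rewrite mulnC exprM wmod; move: hd; rewrite /dvdn => /eqP ->; by rewrite expr1n.
have u1 : w ^+ a != 1.
  by rewrite wmod w_neq1 // ltn_pmod // andbT lt0n; rewrite /dvdn in hd; rewrite hd.
have uN : (w ^+ a) ^+ N = 1 by rewrite -exprM mulnC exprM wN expr1n.
have := subrX1 (w ^+ a) N; rewrite uN subrr => /esym /eqP.
rewrite mulf_eq0 subr_eq0 (negbTE u1) /= => /eqP h.
transitivity (\sum_(i < N) (w ^+ a) ^+ i); last by [].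
by apply: eq_bigr => k _; rewrite mulnC exprM.
Qed.

Lemma w_neq0 : w != 0.
Proof.
apply/negP => /eqP h; have := wN.
by move: N0; case: (N) => // n _; rewrite h expr0n /= => /eqP; rewrite eq_sym oner_eq0.
Qed.

Lemma wJ : w^* = w ^+ (N - 1).
Proof.
apply: (mulfI w_neq0).
rewrite -exprS subn1 prednK // wN /w expiJ -expiD subrr expi0 //.
Qed.

Lemma wXJ j : (w ^+ j)^* = w ^+ ((N - 1) * j).
Proof. rewrite rmorphXn. set u := (X in X ^+ j = _). have -> : u = w ^+ (N - 1) by rewrite -wJ. by rewrite -exprM. Qed.

Lemma dvd_e n n' l : (n' < N)%N -> (N %| n + (N - 1) * n' + l)%N = (n' == (n + l) %% N)%N.
Proof.
move=> hn'.
have hs : (n' + (n + (N - 1) * n' + l) = n' * N + (n + l))%N.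
  rewrite mulnBl mul1n mulnC; have : (n' <= N * n')%N by rewrite leq_pmull.
  lia.
rewrite /dvdn -{2}(mod0n N) -(eqn_modDl n') addn0 hs modnMDl (modn_small hn').
by rewrite eq_sym.
Qed.

Lemma conjM (u v : C) : (u * v)^* = u^* * v^*. Proof. exact: rmorphM. Qed.
Lemma conj_sum (I : Type) (r : seq I) (P : pred I) (F : I -> C) :
  (\sum_(i <- r | P i) F i)^* = \sum_(i <- r | P i) (F i)^*.
Proof. exact: rmorph_sum. Qed.

Section A.
Variables (g x : nat -> C) (m l : nat).
Hypotheses (hm : (m < N)%N) (hl : (l < N)%N).

Let a n := x n * g ((m + N - n) %% N)%N.

Lemma stftE k : stft N g x m k = \sum_(n < N) a n * w ^+ (k * n).
Proof. by apply: eq_bigr => n _; rewrite twiddleE. Qed.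

Lemma ZE : Zcoef N (stft_mag2 N g x) m l =
  N%:R * \sum_(n < N) a n * (a ((n + l) %% N)%N)^*.
Proof.
rewrite /Zcoef.
transitivity (\sum_(k < N) \sum_(n < N) \sum_(n' < N)
   (a n * (a n')^*) * w ^+ (k * (n + (N - 1) * n' + l))).
  apply: eq_bigr => k _.
  rewrite /stft_mag2 normCK stftE twiddleE conj_sum mulr_suml mulr_suml.
  apply: eq_bigr => n _; rewrite mulr_sumr mulr_suml.
  apply: eq_bigr => n' _; rewrite conjM wXJ !mulnDr mulnCA !exprD; ring.
rewrite exchange_big mulr_sumr; apply: eq_bigr => n _.
rewrite exchange_big.
transitivity (\sum_(n' < N) (if n' == Ordinal (@ltn_pmod (n + l) N N0) then
   N%:R * (a n * (a n')^*) else 0)).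
  apply: eq_bigr => n' _.
  rewrite -mulr_sumr.
  have -> : \sum_(k < N) w ^+ (k * (n + (N - 1) * n' + l)) =
            \sum_(k < N) w ^+ (k * (n + (N - 1) * n' + l)) by [].
  rewrite sum_w dvd_e //.
  rewrite -val_eqE /=.
  by case: ifP => _; rewrite ?mulr0 // mulrC.
rewrite -big_mkcond big_pred1_eq /=. by [].
Qed.
End A.

Lemma mod2 a : (a < N + N)%N -> (a %% N = if (a < N)%N then a else a - N)%N.
Proof.
move=> h; case: ifP => [/modn_small //|/negbT]; rewrite -leqNgt => hN.
rewrite -{1}(subnK hN) modnDr modn_small //; lia.
Qed.

Lemma idx1 m j l : (m < N)%N -> (j < N)%N -> (l < N)%N ->
  ((((m + N - j) %% N) + N - l %% N) %% N = (m + N - (j + l) %% N) %% N)%N.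
Proof.
move=> hm hj hl; rewrite (modn_small hl).
rewrite (mod2 (m + N - j)); last lia.
rewrite (mod2 (j + l)); last lia.
case: ifP => [h1|/negbT h1]; case: ifP => [h2|/negbT h2].
all: rewrite [in LHS]mod2; [rewrite [in RHS]mod2; [|lia] | lia].
all: case: ifP => [h3|/negbT h3]; case: ifP => [h4|/negbT h4]; lia.
Qed.

Definition xtrue (x : nat -> C) (l : nat) : 'cV[C]_N :=
  \col_(n < N) (x n * (x ((n + l) %% N)%N)^*).

Lemma GxE (g x : nat -> C) m l (hm : (m < N)%N) (hl : (l < N)%N) :
  Zcoef N (stft_mag2 N g x) m l =
  N%:R * (Gmat N g l *m xtrue x l) (Ordinal hm) 0.
Proof.
rewrite ZE // !mxE; congr (_ * _); apply: eq_bigr => j _.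
rewrite !mxE /Gcol /= idx1 // modn_mod conjM; ring.
Qed.

Lemma zvecE (g x : nat -> C) l (hl : (l < N)%N) :
  zvec N (stft_mag2 N g x) l = N%:R *: (Gmat N g l *m xtrue x l).
Proof.
apply/matrixP => i j; rewrite !mxE (@GxE g x i l (ltn_ord i) hl) (ord1 j); congr (_ * _).
by rewrite !mxE; apply: eq_bigr => k _; congr (_ * _); congr (Gmat _ _ _ _ _); apply: val_inj.
Qed.

Lemma xl_vecE (g x : nat -> C) l (hl : (l < N)%N) :
  Gmat N g l \in unitmx ->
  xl_vec N g (stft_mag2 N g x) l = xtrue x l.
Proof.
move=> hu; rewrite /xl_vec zvecE // -scalemxAr mulKmx // scalerA mulVf ?NC0 //.
by rewrite scale1r.
Qed.

Lemma window_zero (f : nat -> C) K : (0 < K)%N -> (K <= N)%N -> coprime N K ->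
  (forall a, f (a %% N)%N = f a) ->
  (forall j, (j < N)%N -> \sum_(t < K) f (j + N - t)%N = 0) ->
  forall a, f a = 0.
Proof.
move=> K0 KN cop hp hs.
have fN a : f (a + N)%N = f a by rewrite -hp modnDr hp.
have hs' j : \sum_(t < K) f (j + N - t)%N = 0.
  rewrite -[RHS](hs (j %% N)%N) ?ltn_pmod //; apply: eq_bigr => t _.
  rewrite -hp -[RHS]hp; congr f.
  rewrite {1}(divn_eq j N).
  have ht : (t <= N)%N by apply: leq_trans (ltnW (ltn_ord t)) KN.
  have -> : (j %/ N * N + j %% N + N - t = j %/ N * N + (j %% N + N - t))%N by lia.
  by rewrite modnMDl.
have sh c : f (c + K)%N = f c.
  move: K0 KN cop hs hs'; case: K => // K' _ KN cop hs hs'.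
  move: (hs' (c + K')%N) (hs' (c + K'.+1)%N).
  rewrite big_ord_recr big_ord_recl /=.
  have -> : \sum_(i < K') f (c + K'.+1 + N - bump 0 i)%N =
            \sum_(i < K') f (c + K' + N - i)%N.
    apply: eq_bigr => i _; congr f; rewrite /bump /=; lia.
  have -> : (c + K' + N - K' = c + N)%N by lia.
  have -> : (c + K'.+1 + N - 0 = (c + K'.+1) + N)%N by lia.
  rewrite !fN => /eqP h1 /eqP h2.
  rewrite addrC addr_eq0 in h1; rewrite addr_eq0 in h2.
  by rewrite (eqP h1) (eqP h2).
have it q c : f (c + q * K)%N = f c.
  elim: q => [|q IH]; first by rewrite mul0n addn0.
  by rewrite mulSnr addnA sh.
case: (Bezoutl K N0) => q _ hq.
move: cop; rewrite /coprime => /eqP g1; rewrite g1 in hq.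
have step c : f c.+1 = f c.
  have e : f (c + (1 + q * K))%N = f c.
    by rewrite -hp -[RHS]hp -(divnK hq) addnC modnMDl.
  by rewrite -e addnA addn1 it.
have cst a : f a = f 0%N by elim: a => // a IH; rewrite step.
have := hs' 0%N.
rewrite (eq_bigr (fun _ => f 0%N)); last by move=> t _; rewrite cst.
rewrite sumr_const card_ord => /eqP; rewrite -mulr_natl mulf_eq0 pnatr_eq0.
by rewrite eqn0Ngt K0 /= => /eqP h a; rewrite cst h.
Qed.

Lemma sum_window (F : nat -> C) s K n : (s + K <= n)%N ->
  \sum_(t < n) (if (s <= t < s + K)%N then F t else 0) = \sum_(t < K) F (t + s)%N.
Proof.
move=> h.
rewrite -(big_mkord xpredT (fun t => if (s <= t < s + K)%N then F t else 0)).
rewrite (@big_cat_nat _ _ _ s) //=; last lia.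
rewrite [X in _ + X](@big_cat_nat _ _ _ (s + K) s n xpredT _ (leq_addr K s) h) /=.
rewrite [X in X + _]big_nat_cond [X in X + _]big1 ?add0r; last first.
  by move=> i /andP[/andP[_ hi] _]; rewrite leqNgt hi.
rewrite [X in _ + X]big_nat_cond [X in _ + X]big1 ?addr0; last first.
  by move=> i /andP[/andP[hi _] _]; rewrite [(i < _)%N]ltnNge hi andbF.
rewrite big_nat_cond (eq_bigr F); last by move=> i /andP[/andP[-> ->] _].
rewrite -big_nat_cond -{1}(add0n s) big_addn addKn big_mkord.
by apply: eq_bigr.
Qed.

Lemma invol j t : (j < N)%N -> (t < N)%N -> ((j + N - (j + N - t) %% N) %% N = t)%N.
Proof.
move=> hj ht; rewrite (mod2 (j + N - t)); last lia.
case: ifP => [h1|/negbT h1]; rewrite mod2; try lia.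
all: case: ifP => [h2|/negbT h2]; lia.
Qed.

Lemma Gmat_unit (g : nat -> C) l s K : (s <= 1)%N -> (0 < K)%N -> (s + K <= N)%N ->
  coprime N K ->
  (forall t, (t < N)%N -> Gcol N g l t = if (s <= t < s + K)%N then 1 else 0) ->
  Gmat N g l \in unitmx.
Proof.
move=> hs K0 hK cop hc.
rewrite unitmxE unitfE -det_tr; apply/negP => /det0P [v vn0 hv].
pose f a := v 0 (Ordinal (@ltn_pmod a N N0)).
have hp a : f (a %% N)%N = f a.
  by rewrite /f; congr (v _ _); apply: val_inj; rewrite /= modn_mod.
have hsum j : (j < N)%N -> \sum_(t < K) f (j + N - (t + s))%N = 0.
  move=> hj; have := congr1 (fun M : 'M[C]_(1, N) => M 0 (Ordinal hj)) hv; rewrite !mxE => h.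
  rewrite -[RHS]h.
  pose sg (t : 'I_N) : 'I_N := Ordinal (@ltn_pmod (j + N - t) N N0).
  have sgK : cancel sg sg by move=> t; apply: val_inj; rewrite /= invol.
  rewrite (reindex_inj (can_inj sgK)) /=.
  rewrite -(@sum_window (fun t => f (j + N - t)%N) s K N) //.
  apply: eq_bigr => t _; rewrite !mxE /= invol // hc //.
  by case: ifP => _; rewrite ?mulr1 ?mulr0.
pose f' a := f (a + N - s)%N.
have f'0 : forall a, f' a = 0.
  have KN : (K <= N)%N by lia.
  apply: (@window_zero f' K) => //.
    move=> a; rewrite /f' -hp -[RHS]hp; congr f.
    rewrite {2}(divn_eq a N).
    have -> : (a %/ N * N + a %% N + N - s = a %/ N * N + (a %% N + N - s))%N by lia.
    by rewrite modnMDl.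
  move=> j hj; rewrite -[RHS](hsum j hj); apply: eq_bigr => t _; rewrite /f'.
  have ht : (t + s <= N)%N by have := ltn_ord t; lia.
  rewrite -[RHS]hp -[LHS]hp; congr f.
  have -> : (j + N - t + N - s = (j + N - (t + s)) + N)%N by lia.
  by rewrite modnDr.
apply/negP: vn0; rewrite negbK; apply/eqP/matrixP => i k.
rewrite (ord1 i) !mxE.
have := f'0 (k + s)%N; rewrite /f'.
have -> : (k + s + N - s = k + N)%N by lia.
rewrite -hp modnDr /f => <-; congr (v _ _); apply: val_inj; rewrite /= !modn_mod modn_small //.
Qed.

Lemma vgetE (v : 'cV[C]_N) n (h : (n < N)%N) : vget N v n = v (Ordinal h) ord0.
Proof. by rewrite /vget insubT. Qed.

Lemma Gcol_rect0 W t : (t < N)%N ->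
  Gcol N (@rect_window R N W) 0 t = if (0 <= t < 0 + W)%N then 1 else 0.
Proof.
move=> ht; rewrite /Gcol /rect_window (modn_mod t N) mod0n subn0 modnDr (modn_mod t N) modn_small //.
by rewrite add0n /=; case: ifP => _; rewrite ?conjC1 ?conjC0 ?mulr1 ?mulr0.
Qed.

Lemma Gcol_rect1 W t : (2 <= N)%N -> (1 <= W)%N -> (W <= N - 1)%N -> (t < N)%N ->
  Gcol N (@rect_window R N W) 1 t = if (1 <= t < 1 + (W - 1))%N then 1 else 0.
Proof.
move=> N2 W1 WN ht; rewrite /Gcol /rect_window !modn_mod (@modn_small 1 N) //.
rewrite (modn_small ht).
case: t ht => [|t] ht.
  rewrite add0n modn_small; last lia.
  have -> : (N - 1 < W)%N = false by apply/negbTE; rewrite -leqNgt.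
  by rewrite conjC0 mulr0.
have -> : (t.+1 + N - 1 = t + N)%N by lia.
rewrite modnDr modn_small; last lia.
all: repeat (case: ifP => [?|/negbT ?]).
all: rewrite ?conjC1 ?conjC0 ?mulr1 ?mulr0 //.
all: exfalso; lia.
Qed.
End S.

Lemma expi_arg (R : realType) (z : R[i]) : `|z| = 1 -> exists phi : R, expi phi = z.
Proof.
case: z => a b h.
have hab : a ^+ 2 + b ^+ 2 = 1.
  have := add_Re2_Im2 (a +i* b)%C; rewrite h expr1n /= => /(congr1 (@complex.Re R)).
  by [].
have ha : -1 <= a <= 1 by apply/andP; split; nra.
have ha' : a \in `[-1, 1] by rewrite in_itv /= ha.
have ca := acosK ha'.
have sa : sin (acos a) = `|b|.
  by rewrite sin_acos // (_ : 1 - a ^+ 2 = b ^+ 2) ?sqrtr_sqr //; lra.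
exists (if 0 <= b then acos a else - acos a); rewrite /expi.
case: ifP => hb; first by rewrite ca sa ger0_norm.
by rewrite cosN sinN ca sa ltr0_norm ?opprK // ltNge hb.
Qed.

Lemma conjV (R : realType) (u : R[i]) : (u^-1)^* = (u^*)^-1.
Proof. exact: fmorphV. Qed.

Theorem corollary2 (R : realType) (N W : nat) :
  (3 <= N)%N ->
  (2 <= W)%N -> (W <= N - 1)%N ->
  coprime N W -> coprime N (W - 1) ->
  forall x : nat -> R[i],
    (forall n, (n < N)%N -> x n != 0) ->
    exists phi : R, forall n, (n < N)%N ->
      algebraic_algorithm N (rect_window N W)
        (stft_mag2 N (rect_window N W) x) n = expi phi * x n.
Proof.
move=> N3 W2 WN cW cW1 x hx.
have N0 : (0 < N)%N by lia.
have u0 : Gmat N (@rect_window R N W) 0 \in unitmx.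
  apply: (@Gmat_unit R N N0 _ 0 0 W) => //; try lia.
  by move=> t ht; apply: Gcol_rect0.
have u1 : Gmat N (@rect_window R N W) 1 \in unitmx.
  apply: (@Gmat_unit R N N0 _ 1 1 (W - 1)) => //; try lia.
  by move=> t ht; apply: Gcol_rect1 => //; lia.
set g := @rect_window R N W in u0 u1 *.
have xl0 n : (n < N)%N -> xl N g (stft_mag2 N g x) 0 n = x n * (x n)^*.
  move=> hn; rewrite /xl xl_vecE // (@vgetE _ _ _ _ hn) mxE addn0 modn_small //.
have xl1 n : (n.+1 < N)%N -> xl N g (stft_mag2 N g x) 1 n = x n * (x n.+1)^*.
  move=> hn; have hn2 : (n < N)%N by lia.
  rewrite /xl xl_vecE ?(@vgetE _ _ _ _ hn2) ?mxE ?addn1 ?modn_small //; lia.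
have x0 : x 0%N != 0 by apply: hx.
pose u := `|x 0%N| / x 0%N.
have un : `|u| = 1 by rewrite /u normrM normfV normr_id mulfV // normr_eq0.
have u0' : u != 0 by rewrite -normr_eq0 un oner_eq0.
have uu : u * u^* = 1 by rewrite -normCK un expr1n.
have uJ : u^* = u^-1 by apply: (mulfI u0'); rewrite uu mulfV.
have key n : (n < N)%N -> algebraic_algorithm N g (stft_mag2 N g x) n = u * x n.
  rewrite /algebraic_algorithm; elim: n => [_|n IH hn].
    by rewrite /= xl0 // -normCK sqrCK ?normr_ge0 // /u divfK.
  rewrite /= IH ?(ltnW hn) // xl1 // conjcE.
  have xn : x n != 0 by apply: hx; lia.
  have -> : x n * (x n.+1)^* / (u * x n) = (x n.+1)^* / u.
    by rewrite [u * _]mulrC invfM mulrA [x n * _]mulrC mulfK.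
  by rewrite conjM conjCK conjV uJ invrK mulrC.
have [phi hphi] := @expi_arg R u un.
by exists phi => n hn; rewrite key // hphi.
Qed.
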